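(* For every $n\ge0$, the simplex $\mathbf{\Delta}^n$ is fibrant in the Thomason model structure on $\mathbf{Cpx}$, i.e. $\mathrm{Ex}^2\mathrm{Sing}(\mathbf{\Delta}^n)$ is a Kan complex.
   Context: A simplicial complex consists of a vertex set and a collection of nonempty finite subsets (simplices) containing all singletons and closed under nonempty subsets; maps are vertex functions preserving simplices; $\mathbf{Cpx}$ is the category. $\mathbf{\Delta}^n$ is the complex on $\{0,\dots,n\}$ in which every nonempty subset is a simplex. $\mathrm{Sing}(K)_n=\mathbf{Cpx}(\mathbf{\Delta}^n,K)$ with simplicial operators by precomposition; $\mathrm{Ex}$ is the right adjoint of barycentric subdivision of simplicial sets. In the Thomason model structure on $\mathbf{Cpx}$ a map $f$ is a fibration iff $\mathrm{Ex}^2\mathrm{Sing}(f)$ is a Kan fibration. *)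

(* Defs.v *)
From HB Require Import structures.
From mathcomp Require Import all_boot all_order.
From mathcomp Require Import finmap.

Set Implicit Arguments.
Unset Strict Implicit.
Unset Printing Implicit Defensive.

Local Open Scope fset_scope.

Record cpx := Cpx {
  vert : choiceType;
  simplex : {fset vert} -> Prop;
  simplex_neq0 : forall s, simplex s -> s != fset0;
  simplex1 : forall v : vert, simplex [fset v];
  simplex_sub : forall s t, simplex s -> t `<=` s -> t != fset0 -> simplex t
}.

Definition simplicial (K L : cpx) (f : vert K -> vert L) : Prop :=
  forall s, simplex s -> simplex [fset f x | x in s].
Arguments simplicial : clear implicits.

Lemma DeltaC_sub (n : nat) (s t : {fset 'I_n.+1}) :
  s != fset0 -> t `<=` s -> t != fset0 -> t != fset0.
Proof. by []. Qed.

Lemma DeltaC_1 (n : nat) (v : 'I_n.+1) : [fset v] != fset0.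
Proof. by apply/fset0Pn; exists v; rewrite inE. Qed.

Definition DeltaC (n : nat) : cpx :=
  @Cpx ('I_n.+1 : choiceType) (fun s => s != fset0) (fun s h => h)
       (@DeltaC_1 n) (@DeltaC_sub n).

(* Simplicial operators [m] -> [n]: monotone maps {0..m} -> {0..n}. *)
Definition mono (m n : nat) :=
  {f : 'I_m.+1 -> 'I_n.+1 | forall i j : 'I_m.+1, i <= j -> f i <= f j}.

(* A simplicial set: sets X_n and a (contravariant) action of simplicial
   operators; functoriality is stated separately (is_sset). *)
Record sset := SSet {
  sobj : nat -> Type;
  sact : forall m n, mono m n -> sobj n -> sobj m
}.

Definition mono_id (n : nat) : mono n n := @exist _ (fun f : 'I_n.+1 -> 'I_n.+1 => forall i j : 'I_n.+1, i <= j -> f i <= f j) id (fun i j h => h).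

Lemma mono_comp_proof (k m n : nat) (a : mono k m) (b : mono m n) :
  forall i j : 'I_k.+1, i <= j -> (sval b \o sval a) i <= (sval b \o sval a) j.
Proof. by move=> i j h; apply: (svalP b); apply: (svalP a). Qed.

Definition mono_comp (k m n : nat) (a : mono k m) (b : mono m n) : mono k n :=
  exist _ (sval b \o sval a) (@mono_comp_proof k m n a b).

Definition is_sset (X : sset) : Prop :=
  (forall n (x : sobj X n), sact (mono_id n) x = x) /\
  (forall k m n (a : mono k m) (b : mono m n) (x : sobj X n),
      sact (mono_comp a b) x = sact a (sact b x)).

Definition natural (A X : sset) (f : forall m, sobj A m -> sobj X m) : Prop :=
  forall m m' (a : mono m' m) (x : sobj A m), f m' (sact a x) = sact a (f m x).

Lemma Sing_act_proof (K : cpx) (m n : nat) (a : mono m n)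
    (f : {g : 'I_n.+1 -> vert K | simplicial (DeltaC n) K g}) :
  simplicial (DeltaC m) K (sval f \o sval a).
Proof.
move=> s /= hs; rewrite (imfset_comp _ (sval a) (sval f)).
apply: (svalP f) => /=; apply/fset0Pn.
case/fset0Pn: hs => x hx; exists (sval a x).
by rewrite in_imfset.
Qed.

Definition Sing (K : cpx) : sset :=
  @SSet (fun n => {g : 'I_n.+1 -> vert K | simplicial (DeltaC n) K g})
        (fun m n a f => exist _ (sval f \o sval a) (Sing_act_proof a f)).

(* sd Delta^n is the nerve of the poset of nonempty subsets of {0..n}
   ordered by inclusion: its m-simplices are chains c_0 <= ... <= c_m. *)
Definition is_chain (n m : nat) (c : {ffun 'I_m.+1 -> {set 'I_n.+1}}) : bool :=
  [forall j, c j != set0] &&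
  [forall i : 'I_m.+1, forall j : 'I_m.+1, (i <= j) ==> (c i \subset c j)].

Definition chain (n m : nat) := {c : {ffun 'I_m.+1 -> {set 'I_n.+1}} | is_chain c}.

Lemma sd_act_proof (n m m' : nat) (a : mono m' m) (c : chain n m) :
  is_chain [ffun j => sval c (sval a j)].
Proof.
case: c => c /= /andP[/forallP h0 /forallP h1].
apply/andP; split; apply/forallP => i; rewrite ?ffunE //.
apply/forallP => j; rewrite !ffunE; apply/implyP => hij.
by move: (h1 (sval a i)) => /forallP /(_ (sval a j)) /implyP; apply; apply: (svalP a).
Qed.

Definition sdDelta (n : nat) : sset :=
  @SSet (chain n)
        (fun m m' a c => exist _ [ffun j => sval c (sval a j)] (sd_act_proof a c)).

Lemma sd_map_proof (n' n m : nat) (t : mono n' n) (c : chain n' m) :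
  is_chain [ffun j => sval t @: sval c j].
Proof.
case: c => c /= /andP[/forallP h0 /forallP h1].
apply/andP; split; apply/forallP => i; rewrite ?ffunE.
  case/set0Pn: (h0 i) => x hx; apply/set0Pn; exists (sval t x).
  by apply: imset_f.
apply/forallP => j; rewrite !ffunE; apply/implyP => hij.
apply: imsetS.
by move: (h1 i) => /forallP /(_ j) /implyP; apply.
Qed.

Definition sd_map (n' n m : nat) (t : mono n' n) (c : chain n' m) : chain n m :=
  exist _ [ffun j => sval t @: sval c j] (sd_map_proof t c).

Definition Ex_obj (X : sset) (n : nat) :=
  {f : forall m, sobj (sdDelta n) m -> sobj X m | natural f}.

Lemma Ex_act_proof (X : sset) (n' n : nat) (t : mono n' n) (F : Ex_obj X n) :
  natural (fun m (c : sobj (sdDelta n') m) => sval F m (sd_map t c)).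
Proof.
move=> m m' a c /=; rewrite -(svalP F); congr (sval F _ _).
by apply: val_inj => /=; apply/ffunP => j; rewrite !ffunE.
Qed.

Definition Ex (X : sset) : sset :=
  @SSet (Ex_obj X)
        (fun n' n t F => exist _ (fun m c => sval F m (sd_map t c))
                                 (Ex_act_proof t F)).

Lemma coface_proof (n : nat) (i : 'I_n.+2) :
  forall j k : 'I_n.+1, j <= k -> lift i j <= lift i k.
Proof. by move=> j k h; rewrite /= leq_bump2. Qed.

Definition coface (n : nat) (i : 'I_n.+2) : mono n n.+1 :=
  exist _ (lift i) (@coface_proof n i).

(* A horn Lambda^{n+1}_k -> X is a family x_i in X_n (i <> k) agreeing on
   overlaps of the faces; X is Kan if every horn has a filler. *)
Definition Kan (X : sset) : Prop :=
  forall (n : nat) (k : 'I_n.+2) (x : 'I_n.+2 -> sobj X n),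
    (forall (i j : 'I_n.+2) (m : nat) (a b : mono m n),
        i != k -> j != k ->
        sval (mono_comp a (coface i)) =1 sval (mono_comp b (coface j)) ->
        sact a (x i) = sact b (x j)) ->
    exists y : sobj X n.+1,
      forall i : 'I_n.+2, i != k -> sact (coface i) y = x i.

(* Main.v *)
Require Import Defs.
From HB Require Import structures.
From mathcomp Require Import all_boot all_order.
From mathcomp Require Import finmap.
From Stdlib Require Import FunctionalExtensionality ProofIrrelevance.

Set Implicit Arguments.
Unset Strict Implicit.
Unset Printing Implicit Defensive.

Lemma sig_eqP (A : Type) (P : A -> Prop) (x y : {a : A | P a}) :
  sval x = sval y -> x = y.
Proof.
case: x y => [a pa] [b pb] /= e; subst b; congr exist; apply: proof_irrelevance.
Qed.

Definition XX (n : nat) := Sing (DeltaC n).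
Definition E1 (n : nat) := Ex (XX n).
Definition E2 (n : nat) := Ex (E1 n).

Lemma anysimp (n l : nat) (g : 'I_l.+1 -> 'I_n.+1) : simplicial (DeltaC l) (DeltaC n) g.
Proof.
move=> s /= /fset0Pn [x hx]; apply/fset0Pn; exists (g x); by rewrite in_imfset.
Qed.

Definition mkX (n l : nat) (g : 'I_l.+1 -> 'I_n.+1) : sobj (XX n) l :=
  exist (fun g => simplicial (DeltaC l) (DeltaC n) g) g (anysimp g).

Lemma eqX (n l : nat) (g h : sobj (XX n) l) : (forall p, sval g p = sval h p) -> g = h.
Proof. move=> e; apply: sig_eqP; apply: functional_extensionality => p; exact: e. Qed.

Lemma eqE1 (n m : nat) (f g : sobj (E1 n) m) :
  (forall l d, sval f l d = sval g l d) -> f = g.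
Proof.
move=> e; apply: sig_eqP; apply: functional_extensionality_dep => l.
apply: functional_extensionality => d; exact: e.
Qed.

Lemma eqE2 (n m : nat) (f g : sobj (E2 n) m) :
  (forall l d, sval f l d = sval g l d) -> f = g.
Proof.
move=> e; apply: sig_eqP; apply: functional_extensionality_dep => l.
apply: functional_extensionality => d; exact: e.
Qed.

Lemma chain0_proof (m : nat) (S : {set 'I_m.+1}) :
  is_chain [ffun _ : 'I_1 => if S == set0 then setT else S].
Proof.
apply/andP; split; apply/forallP => i; rewrite ?ffunE.
  case: (S =P set0) => [_|/eqP //]; apply/set0Pn; exists ord0; by rewrite inE.
by apply/forallP => j; rewrite !ffunE; apply/implyP.
Qed.

Definition chain0 (m : nat) (S : {set 'I_m.+1}) : chain m 0 := exist (@is_chain m 0) _ (chain0_proof S).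

Definition vv1 (n m : nat) (f : sobj (E1 n) m) (S : {set 'I_m.+1}) : 'I_n.+1 :=
  sval (sval f 0 (chain0 S)) ord0.

Lemma chain_ne0 (k m : nat) (c : chain k m) q : sval c q != set0.
Proof. by case: c => c /= /andP[/forallP h _]. Qed.

Lemma chain_mono (k m : nat) (c : chain k m) (q q' : 'I_m.+1) : q <= q' -> sval c q \subset sval c q'.
Proof. by case: c => c /= /andP[_ /forallP h] hq; move: (h q) => /forallP /(_ q') /implyP; apply. Qed.

Lemma cst_proof (l m : nat) (p : 'I_m.+1) : forall i j : 'I_l.+1, i <= j -> (fun _ => p) i <= (fun _ => p) j.
Proof. by []. Qed.
Definition cst (l m : nat) (p : 'I_m.+1) : mono l m := exist _ (fun _ => p) (@cst_proof l m p).

Lemma lemB (n m l : nat) (f : sobj (E1 n) m) (d : chain m l) (p : 'I_l.+1) :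
  sval (sval f l d) p = vv1 f (sval d p).
Proof.
have := svalP f l 0 (cst 0 p) d => /= e.
rewrite /vv1.
have -> : chain0 (sval d p) = exist _ [ffun j => sval d (sval (cst 0 p) j)] (sd_act_proof (cst 0 p) d).
  apply: val_inj => /=; apply/ffunP => j; rewrite !ffunE /=.
  by rewrite (negbTE (chain_ne0 d p)).
by rewrite e.
Qed.



Definition isflag (T : finType) (P : {set {set T}}) :=
  [&& P != set0, set0 \notin P & [forall A in P, forall B in P, (A \subset B) || (B \subset A)]].

Lemma flag_cmp (T : finType) (P : {set {set T}}) A B :
  isflag P -> A \in P -> B \in P -> (A \subset B) || (B \subset A).
Proof. by case/and3P => _ _ /forall_inP h hA hB; move/forall_inP: (h A hA); apply. Qed.

Lemma flag_ne0 (T : finType) (P : {set {set T}}) A : isflag P -> A \in P -> A != set0.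
Proof. by case/and3P => _ h _ hA; apply: contraNneq h => <-. Qed.

Lemma min_mem (T : finType) (P Q : {set {set T}}) :
  isflag P -> Q \subset P -> Q != set0 -> exists2 A, A \in Q & forall B, B \in Q -> A \subset B.
Proof.
move=> fP sQP /set0Pn [A0 hA0].
case: (@arg_minnP _ A0 (mem Q) (fun A => #|A|) hA0) => A hA hmin.
exists A => // B hB.
case/orP: (flag_cmp fP (subsetP sQP _ hA) (subsetP sQP _ hB)) => // hBA.
have := subset_leqif_card hBA => -[hle <-]; by rewrite eqn_leq hle hmin.
Qed.

Lemma max_mem (T : finType) (P : {set {set T}}) :
  isflag P -> exists2 A, A \in P & forall B, B \in P -> B \subset A.
Proof.
move=> fP; have := fP; case/and3P => /set0Pn [A0 hA0] _ _.
case: (@arg_maxnP _ A0 (mem P) (fun A => #|A|) hA0) => A hA hmax.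
exists A => // B hB.
case/orP: (flag_cmp fP hA hB) => // hAB.
have := subset_leqif_card hAB => -[hle <-]; by rewrite eqn_leq hle; exact: hmax B hB.
Qed.

Definition ee (k : nat) (P : {set {set 'I_k.+1}}) (t : 'I_k.+1) : {set 'I_k.+1} :=
  if [exists A in P, t < #|A|] then \bigcap_(A in P | t < #|A|) A else \bigcup_(A in P) A.

Lemma ee_in k (P : {set {set 'I_k.+1}}) t : isflag P -> ee P t \in P.
Proof.
move=> fP; rewrite /ee; case: ifP => [/exists_inP [A0 hA0 ht]|_].
  set Q := [set A in P | t < #|A|].
  have sQ : Q \subset P by apply/subsetP => A; rewrite inE => /andP[].
  have nQ : Q != set0 by apply/set0Pn; exists A0; rewrite inE hA0.
  case: (min_mem fP sQ nQ) => A hA hmin.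
  have -> : \bigcap_(B in P | t < #|B|) B = A.
    apply/eqP; rewrite eqEsubset; apply/andP; split.
      move: hA; rewrite inE => /andP[h1 h2]; apply: (bigcap_min A) => //; by rewrite h1.
    apply/bigcapsP => B /andP[h1 h2]; apply: hmin; by rewrite inE h1.
  by move: hA; rewrite inE => /andP[].
case: (max_mem fP) => A hA hmax.
have -> : \bigcup_(B in P) B = A.
  apply/eqP; rewrite eqEsubset; apply/andP; split.
    by apply/bigcupsP => B hB; apply: hmax.
  exact: bigcup_sup.
done.
Qed.

Lemma ee_card k (P : {set {set 'I_k.+1}}) A : isflag P -> A \in P ->
  ee P (inord (#|A|.-1)) = A.
Proof.
move=> fP hA.
have c0 : 0 < #|A| by rewrite card_gt0; exact: flag_ne0 fP hA.
have c1 : #|A| <= k.+1 by have := max_card A; rewrite card_ord.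
have eA : (inord (#|A|.-1) : 'I_k.+1) = #|A|.-1 :> nat by rewrite inordK // prednK.
rewrite /ee; case: ifP => [_|/exists_inP []]; last first.
  by exists A => //; rewrite eA prednK.
apply/eqP; rewrite eqEsubset; apply/andP; split.
  by apply: (bigcap_min A) => //; rewrite hA /= eA prednK.
apply/bigcapsP => B /andP[hB]; rewrite eA prednK // => hc.
case/orP: (flag_cmp fP hA hB) => // hBA.
have := subset_leqif_card hBA => -[hle hC].
by rewrite -hC eqn_leq hle.
Qed.

Lemma ee_mono k (P : {set {set 'I_k.+1}}) (t t' : 'I_k.+1) : t <= t' -> ee P t \subset ee P t'.
Proof.
move=> htt; rewrite /ee.
case: ifP => [h1|h1]; case: ifP => [h2|h2].
- apply/bigcapsP => B /andP[hB hc]; apply: (bigcap_min B) => //; rewrite hB /=.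
  exact: leq_ltn_trans htt hc.
- case/exists_inP: h1 => A hA hc; apply: subset_trans (bigcup_sup A hA).
  by apply: (bigcap_min A) => //; rewrite hA.
- case/exists_inP: h2 => A hA hc; move/exists_inP: h1 => []; exists A => //.
  exact: leq_ltn_trans htt hc.
- by [].
Qed.



Lemma chainT_proof (k m : nat) : is_chain [ffun _ : 'I_m.+1 => [set: 'I_k.+1]].
Proof.
apply/andP; split; apply/forallP => i; rewrite ?ffunE.
  by apply/set0Pn; exists ord0; rewrite inE.
by apply/forallP => j; rewrite !ffunE; apply/implyP.
Qed.

Definition chainT (k m : nat) : chain k m := exist (@is_chain k m) _ (chainT_proof k m).

Definition echain (k : nat) (P : {set {set 'I_k.+1}}) : chain k k :=
  insubd (chainT k k) [ffun t => ee P t].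

Lemma echain_val k (P : {set {set 'I_k.+1}}) t : isflag P -> sval (echain P) t = ee P t.
Proof.
move=> fP; rewrite /echain val_insubd.
have -> : is_chain [ffun t => ee P t].
  apply/andP; split; apply/forallP => i; rewrite ?ffunE.
    exact: flag_ne0 fP (ee_in i fP).
  apply/forallP => j; rewrite !ffunE; apply/implyP; exact: ee_mono.
by rewrite ffunE.
Qed.

Definition TT (k : nat) (P : {set {set 'I_k.+1}}) : {set 'I_k.+1} :=
  [set (inord (#|A|.-1) : 'I_k.+1) | A : {set 'I_k.+1} in P].

Lemma TT_ne0 k (P : {set {set 'I_k.+1}}) : isflag P -> TT P != set0.
Proof.
case/and3P => /set0Pn [A hA] _ _; apply/set0Pn; exists (inord #|A|.-1).
exact: imset_f.
Qed.

Lemma echain_img k (P : {set {set 'I_k.+1}}) : isflag P ->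
  [set sval (echain P) q | q in TT P] = P.
Proof.
move=> fP; rewrite /TT -imset_comp.
rewrite -[RHS]imset_id; apply: eq_in_imset => A hA /=.
by rewrite echain_val // ee_card.
Qed.

Definition vv2 (n k : nat) (F : sobj (E2 n) k) (P : {set {set 'I_k.+1}}) : 'I_n.+1 :=
  vv1 (sval F k (echain P)) (TT P).

Lemma chain_flag (k m : nat) (c : chain k m) (S : {set 'I_m.+1}) : S != set0 ->
  isflag [set sval c q | q in S].
Proof.
move=> /set0Pn [q0 hq0]; apply/and3P; split.
- by apply/set0Pn; exists (sval c q0); exact: imset_f.
- by apply/imsetP => -[q _ /esym e]; move: (chain_ne0 c q); rewrite e eqxx.
- apply/forall_inP => A /imsetP [q _ ->]; apply/forall_inP => B /imsetP [q' _ ->].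
  case: (leqP q q') => h; first by rewrite (chain_mono c h).
  by rewrite (chain_mono c (ltnW h)) orbT.
Qed.



Lemma vv1_act (n m m' : nat) (f : sobj (E1 n) m) (a : mono m' m) (S : {set 'I_m'.+1}) :
  S != set0 -> vv1 (@sact (E1 n) m' m a f) S = vv1 f (sval a @: S).
Proof.
move=> hS; rewrite /vv1 /=; congr (sval (sval f 0 _) ord0).
apply: val_inj => /=; apply/ffunP => j; rewrite !ffunE.
by rewrite (negbTE hS) imset_eq0 (negbTE hS).
Qed.

Lemma lemC1 (n k m m' : nat) (F : sobj (E2 n) k) (c : chain k m) (a : mono m' m)
  (S : {set 'I_m'.+1}) : S != set0 ->
  vv1 (sval F m' (@sact (sdDelta k) m' m a c)) S = vv1 (sval F m c) (sval a @: S).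
Proof.
move=> hS; rewrite (svalP F m m' a c); exact: vv1_act.
Qed.

From mathcomp Require Import zify.

Lemma card_le (k : nat) (A : {set 'I_k.+1}) : #|A| <= k.+1.
Proof. by have := max_card A; rewrite card_ord. Qed.

Lemma bmap_proof (k m : nat) (c : chain k m) :
  forall i j : 'I_m.+1, i <= j ->
   (fun q => (inord (#|sval c q|.-1) : 'I_k.+1)) i <= (fun q => (inord (#|sval c q|.-1) : 'I_k.+1)) j.
Proof.
move=> i j hij /=.
have h1 := card_le (sval c i); have h2 := card_le (sval c j).
have h3 := subset_leq_card (chain_mono c hij).
rewrite !inordK ?ltnS -?subn1 ?leq_sub2r ?leq_subLR ?add1n //.
Qed.

Definition bmap (k m : nat) (c : chain k m) : mono m k := exist _ _ (bmap_proof c).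

Lemma lemD (n k m : nat) (F : sobj (E2 n) k) (P : {set {set 'I_k.+1}}) (c : chain k m)
  (S : {set 'I_m.+1}) : isflag P -> (forall q, sval c q \in P) -> S != set0 ->
  vv1 (sval F m c) S = vv1 (sval F k (echain P)) (TT [set sval c q | q in S]).
Proof.
move=> fP hc hS.
have ec : c = @sact (sdDelta k) m k (bmap c) (echain P).
  apply: val_inj => /=; apply/ffunP => q; rewrite ffunE /= echain_val //.
  by rewrite ee_card // hc.
rewrite {1}ec lemC1 //; congr vv1.
by rewrite /TT -imset_comp.
Qed.

Lemma lemC (n k m : nat) (F : sobj (E2 n) k) (c : chain k m) (S : {set 'I_m.+1}) :
  S != set0 -> vv1 (sval F m c) S = vv2 F [set sval c q | q in S].
Proof.
move=> hS.
set P := [set sval c q | q in [set: 'I_m.+1]].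
set Q := [set sval c q | q in S].
have fP : isflag P.
  apply: chain_flag; apply/set0Pn; exists ord0; by rewrite inE.
have fQ : isflag Q := chain_flag c hS.
rewrite (lemD F fP) //; last by move=> q; apply: imset_f; rewrite inE.
rewrite /vv2 (@lemD n k k F P (echain Q) (TT Q) fP _ (TT_ne0 fQ)); last first.
  move=> q; rewrite echain_val //.
  have := ee_in q fQ; case/imsetP => q' _ ->; apply: imset_f; by rewrite inE.
by rewrite echain_img.
Qed.

Definition imf (T U : finType) (f : T -> U) (P : {set {set T}}) : {set {set U}} :=
  [set f @: B | B : {set T} in P].

Lemma lemE (n k m : nat) (F : sobj (E2 n) k) (a : mono m k) (P : {set {set 'I_m.+1}}) :
  isflag P -> vv2 (@sact (E2 n) m k a F) P = vv2 F (imf (sval a) P).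
Proof.
move=> fP; rewrite {1}/vv2.
change (vv1 (sval F m (sd_map a (echain P))) (TT P) = vv2 F (imf (sval a) P)).
rewrite lemC ?TT_ne0 //; congr vv2.
rewrite /imf -[in RHS](echain_img fP) -[in RHS]imset_comp; apply: eq_imset => q /=.
by rewrite ffunE.
Qed.



Lemma pre_img (T U W : finType) (f : T -> U) (h : U -> W) (A : {set W}) :
  injective h -> (forall w, w \in A -> exists t, h (f t) = w) ->
  f @: ((h \o f) @^-1: A) = h @^-1: A.
Proof.
move=> hinj hs; apply/setP => u; apply/imsetP/idP.
  by case=> t; rewrite !inE /= => ht ->.
rewrite inE => hu; case: (hs _ hu) => t ht; exists t => //.
  by rewrite inE /= ht.
exact: hinj.
Qed.

Lemma flag_pre (T W : finType) (g : T -> W) (P : {set {set W}}) :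
  isflag P -> (forall A w, A \in P -> w \in A -> exists t, g t = w) ->
  isflag [set g @^-1: A | A : {set W} in P].
Proof.
move=> fP hs; have := fP; case/and3P => /set0Pn [A0 hA0] _ _.
apply/and3P; split.
- by apply/set0Pn; exists (g @^-1: A0); exact: imset_f.
- apply/imsetP => -[A hA e].
  case/set0Pn: (flag_ne0 fP hA) => w hw; case: (hs A w hA hw) => t ht.
  have : t \in g @^-1: A by rewrite inE ht.
  by rewrite -e inE.
- apply/forall_inP => B /imsetP [A hA ->]; apply/forall_inP => B' /imsetP [A' hA' ->].
  case/orP: (flag_cmp fP hA hA') => h; [by rewrite (preimsetS g h) | by rewrite (preimsetS g h) orbT].
Qed.

Definition pre (k : nat) (i : 'I_k.+2) (P : {set {set 'I_k.+2}}) : {set {set 'I_k.+1}} :=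
  [set lift i @^-1: A | A : {set 'I_k.+2} in P].

Lemma cross_abs (n k m : nat) (x : 'I_k.+2 -> sobj (E2 n) k) (i i' : 'I_k.+2)
   (a b : mono m k) (P : {set {set 'I_k.+2}}) :
  @sact (E2 n) m k a (x i) = @sact (E2 n) m k b (x i') ->
  (forall t, lift i (sval a t) = lift i' (sval b t)) ->
  (forall w, w != i -> w != i' -> exists t, lift i (sval a t) = w) ->
  isflag P -> (forall A, A \in P -> (i \notin A) && (i' \notin A)) ->
  vv2 (x i) (pre i P) = vv2 (x i') (pre i' P).
Proof.
move=> hx hab hs fP hP.
set g := fun t => lift i (sval a t).
have hsA : forall A w, A \in P -> w \in A -> exists t, g t = w.
  move=> A w hA hw; case/andP: (hP A hA) => h1 h2.
  apply: hs; [by apply: contraNneq h1 => <- | by apply: contraNneq h2 => <-].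
have fQ := flag_pre fP hsA.
have e1 : pre i P = imf (sval a) [set g @^-1: A | A : {set _} in P].
  rewrite /imf /pre -imset_comp; apply: eq_in_imset => A hA /=.
  by rewrite (pre_img (h := lift i)) //; [exact: lift_inj | move=> w hw; exact: hsA A w hA hw].
have e2 : pre i' P = imf (sval b) [set g @^-1: A | A : {set _} in P].
  rewrite /imf /pre -imset_comp; apply: eq_in_imset => A hA /=.
  have -> : g @^-1: A = (lift i' \o sval b) @^-1: A by apply/setP => t; rewrite !inE /g /= hab.
  rewrite (pre_img (h := lift i')) //; first exact: lift_inj.
  move=> w hw; case: (hsA A w hA hw) => t ht; exists t; by rewrite -ht /g hab.
by rewrite e1 e2 -!lemE // hx.
Qed.

Lemma skip_exists (k : nat) (i i' : 'I_k.+2) : i != i' -> 0 < k ->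
  exists (a b : mono k k), (forall t, lift i (sval a t) = lift i' (sval b t)) /\
    (forall w, w != i -> w != i' -> exists t, lift i (sval a t) = w).
Proof.
move=> hii k0.
case: (unliftP i i') => [i2 ei2|ei]; last by rewrite ei eqxx in hii.
have hi2 : (i2 : nat) <= k by have := ltn_ord i2.
pose s (t : nat) := if t == i2 then (if i2 < k then i2.+1 else i2 - 1) else t.
have s_le : forall t : 'I_k.+1, s t <= k.
  move=> t; have ht := ltn_ord t; rewrite /s; case: (_ =P _) => ?; case: (ltnP i2 k) => ?; lia.
have s_ne : forall t, s t != i2.
  move=> t; rewrite /s; case: (t =P i2) => ?; case: (ltnP i2 k) => ?; apply/eqP; lia.
have s_id : forall t : nat, t != (i2 : nat) -> s t = t.
  by move=> t /negbTE h; rewrite /s h.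
have s_mono : forall t t', t <= t' -> t' <= k -> s t <= s t'.
  move=> t t' h1 h2; rewrite /s; case: (t =P i2) => ?; case: (t' =P i2) => ?; case: (ltnP i2 k) => ?; lia.
pose af (t : 'I_k.+1) : 'I_k.+1 := inord (s t).
have af_val : forall t, (af t : nat) = s t by move=> t; rewrite inordK ?ltnS ?s_le.
have af_mono : forall t t' : 'I_k.+1, t <= t' -> af t <= af t'.
  by move=> t t' h; rewrite !af_val s_mono // -ltnS.
have af_ne : forall t, lift i (af t) != i'.
  move=> t; rewrite ei2; apply: contra_neq (s_ne t) => /lift_inj e.
  by rewrite -af_val e.
pose bf (t : 'I_k.+1) : 'I_k.+1 := odflt ord0 (unlift i' (lift i (af t))).
have hb : forall t, lift i' (bf t) = lift i (af t).
  move=> t; rewrite /bf; case: (unliftP i' (lift i (af t))) => [u ->|e] //.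
  by move: (af_ne t); rewrite e eqxx.
have bf_mono : forall t t' : 'I_k.+1, t <= t' -> bf t <= bf t'.
  move=> t t' h; rewrite -(leq_bump2 i').
  have e1 := congr1 val (hb t); have e2 := congr1 val (hb t'); rewrite /= in e1 e2.
  by rewrite e1 e2 leq_bump2 af_mono.
exists (exist _ af af_mono), (exist _ bf bf_mono); split => /=.
  by move=> t; rewrite hb.
move=> w hw hw'; case: (unliftP i w) => [v ev|ev]; last by rewrite ev eqxx in hw.
exists v; rewrite ev; congr (lift i _); apply: val_inj; rewrite /= af_val s_id //.
by apply: contraNneq hw' => e; rewrite ev ei2 (val_inj e).
Qed.



Lemma cross (n k : nat) (j : 'I_k.+2) (x : 'I_k.+2 -> sobj (E2 n) k)
  (hx : forall (i j0 : 'I_k.+2) (m : nat) (a b : mono m k),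
        i != j -> j0 != j ->
        sval (mono_comp a (coface i)) =1 sval (mono_comp b (coface j0)) ->
        sact a (x i) = sact b (x j0))
  (i i' : 'I_k.+2) (P : {set {set 'I_k.+2}}) :
  i != j -> i' != j -> isflag P -> (forall A, A \in P -> (i \notin A) && (i' \notin A)) ->
  vv2 (x i) (pre i P) = vv2 (x i') (pre i' P).
Proof.
move=> hij hi'j fP hP.
case: (eqVneq i i') => [<- //|hii].
have k0 : 0 < k.
  move: (ltn_ord i) (ltn_ord i') (ltn_ord j) hii hij hi'j; rewrite -!val_eqE /=; lia.
case: (skip_exists hii k0) => a [b [hab hs]].
apply: (cross_abs (a := a) (b := b)) => //.
exact: hx.
Qed.

Lemma lift_pre_img (k : nat) (i : 'I_k.+2) (B : {set 'I_k.+1}) :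
  lift i @^-1: (lift i @: B) = B.
Proof. by apply/setP => u; rewrite inE mem_imset //; exact: lift_inj. Qed.

Definition phi (n k : nat) (j : 'I_k.+2) (x : 'I_k.+2 -> sobj (E2 n) k)
  (P : {set {set 'I_k.+2}}) : 'I_n.+1 :=
  match [pick i | (i != j) && [forall A in P, i \notin A]] with
  | Some i => vv2 (x i) (pre i P)
  | None => ord0
  end.

Definition yX (n k : nat) (j : 'I_k.+2) (x : 'I_k.+2 -> sobj (E2 n) k)
  (m : nat) (c : chain k.+1 m) (l : nat) (d : chain m l) : sobj (XX n) l :=
  mkX (fun p => phi j x [set sval c q | q in sval d p]).

Lemma yE1_proof (n k : nat) (j : 'I_k.+2) (x : 'I_k.+2 -> sobj (E2 n) k)
  (m : nat) (c : chain k.+1 m) : @natural (sdDelta m) (XX n) (yX j x c).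
Proof.
move=> l l' a d; apply: eqX => p /=; by rewrite ffunE.
Qed.

Definition yE1 (n k : nat) (j : 'I_k.+2) (x : 'I_k.+2 -> sobj (E2 n) k)
  (m : nat) (c : chain k.+1 m) : sobj (E1 n) m :=
  exist _ (yX j x c) (yE1_proof j x c).

Lemma y_proof (n k : nat) (j : 'I_k.+2) (x : 'I_k.+2 -> sobj (E2 n) k) :
  @natural (sdDelta k.+1) (E1 n) (yE1 j x).
Proof.
move=> m m' a c; apply: eqE1 => l d; apply: eqX => p /=.
rewrite ffunE -imset_comp; congr phi; apply: eq_imset => q /=; by rewrite ffunE.
Qed.

Definition yE2 (n k : nat) (j : 'I_k.+2) (x : 'I_k.+2 -> sobj (E2 n) k) : sobj (E2 n) k.+1 :=
  exist _ (yE1 j x) (y_proof j x).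

Theorem lemma6p2 : forall n : nat, Kan (Ex (Ex (Sing (DeltaC n)))).
Proof.
move=> n k j x hx.
exists (yE2 j x) => i hij.
apply: (@eqE2 n k) => m c; apply: eqE1 => l d; apply: eqX => p.
rewrite [RHS]lemB [RHS]lemC; last exact: chain_ne0.
rewrite /=.
set P := [set sval (sd_map (coface i) c) q | q in sval d p].
have fP : isflag P := chain_flag _ (chain_ne0 d p).
have avoid : forall A, A \in P -> i \notin A.
  move=> A /imsetP [q _ ->]; rewrite ffunE; apply/imsetP => -[u _ e].
  by apply: (negP (neq_lift i u)); apply/eqP; exact: e.
have eP : pre i P = [set sval c q | q in sval d p].
  rewrite /pre /P -imset_comp; apply: eq_imset => q /=.
  by rewrite ffunE lift_pre_img.
rewrite /phi; case: pickP => [i' /andP [hi'j /forall_inP hall] | none].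
  rewrite -eP; apply: (cross hx) => // A hA; rewrite avoid //.
  by rewrite andbT; exact: hall.
have := none i; rewrite /= hij /= => /negbT/negP; case; apply/forall_inP => A hA; exact: avoid A hA.
Qed.
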